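(* Let $a,b\in E_{d+1}$ be linearly independent and satisfy $(a,a)=(b,b)=(a,b)=0$. Then $d+1\ge4$, and there is a $\Lambda\in G_0$ such that $\Lambda a=e_0+e_1$ and $\Lambda b=\pm(\varepsilon e_{d-1}+e_d)$, where $\varepsilon=\pm1$. Moreover, any $x\in E_{d+1}$ such that $(x,a)=(x,b)=(x,x)=0$ is a linear combination of $a$ and $b$.
   Context: Let $d\ge1$. $E_{d+1}=\mathbb R^{d+1}$ with the bilinear form $(x,y)=x^0y^0+x^dy^d-\sum_{j=1}^{d-1}x^jy^j$ and canonical basis $e_0,\dots,e_d$. $G_0$ is the connected component of the identity of the group of real linear maps of $E_{d+1}$ preserving this form. *)

(* Defs.v *)
From HB Require Import structures.
From mathcomp Require Import all_boot all_order all_algebra.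
From mathcomp Require Import all_classical all_reals all_analysis.
Set Implicit Arguments. Unset Strict Implicit. Unset Printing Implicit Defensive.
Import Order.TTheory GRing.Theory Num.Theory.
Import numFieldTopology.Exports.
Local Open Scope ring_scope.
Local Open Scope classical_set_scope.

(* E_{d+1} = R^{d+1}, represented as column vectors 'cV[R]_(d.+1),
   coordinates indexed 0..d. *)

Definition bform (R : realType) (d : nat) (x y : 'cV[R]_(d.+1)) : R :=
  x ord0 0 * y ord0 0 + x ord_max 0 * y ord_max 0
  - \sum_(j < d.+1 | (0 < (j : nat))%N && ((j : nat) < d)%N) x j 0 * y j 0.

Definition Ogroup (R : realType) (d : nat) : set 'M[R]_(d.+1) :=
  [set L | forall x y, bform (L *m x) (L *m y) = bform x y].

Definition G0 (R : realType) (d : nat) : set 'M[R]_(d.+1) :=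
  connected_component (@Ogroup R d) 1%:M.

Definition evec (R : realType) (d k : nat) : 'cV[R]_(d.+1) :=
  delta_mx (inord k) 0.

(* Main.v *)
Require Import Defs.
From HB Require Import structures.
From mathcomp Require Import all_boot all_order all_algebra.
From mathcomp Require Import all_classical all_reals all_analysis.
From mathcomp Require Import ring lra.
Import Order.TTheory GRing.Theory Num.Theory.
Import numFieldTopology.Exports.
Local Open Scope ring_scope.
Local Open Scope classical_set_scope.
Section Bil.
Variables (R : realType) (d : nat).
Implicit Types (x y z : 'cV[R]_(d.+1)) (k : R).
Local Notation B := (@bform R d).

Lemma bformDl x y z : B (x + y) z = B x z + B y z.
Proof.
rewrite /bform !mxE.
under eq_bigr do rewrite mxE mulrDl.
rewrite big_split /=; ring.
Qed.

Lemma bformZl k x y : B (k *: x) y = k * B x y.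
Proof.
rewrite /bform !mxE.
under eq_bigr do rewrite mxE -mulrA.
rewrite -mulr_sumr; ring.
Qed.

Lemma bformC x y : B x y = B y x.
Proof.
rewrite /bform [x ord0 0 * _]mulrC [x ord_max 0 * _]mulrC; congr (_ - _).
by apply: eq_bigr => i _; rewrite mulrC.
Qed.

Lemma bformDr x y z : B z (x + y) = B z x + B z y.
Proof. by rewrite bformC bformDl !(bformC z). Qed.

Lemma bformZr k x y : B y (k *: x) = k * B y x.
Proof. by rewrite bformC bformZl bformC. Qed.

Lemma bformNl x y : B (- x) y = - B x y.
Proof. by rewrite -scaleN1r bformZl mulN1r. Qed.

Lemma bformNr x y : B y (- x) = - B y x.
Proof. by rewrite -scaleN1r bformZr mulN1r. Qed.

Lemma bformBl x y z : B (x - y) z = B x z - B y z.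
Proof. by rewrite bformDl bformNl. Qed.

Lemma bformBr x y z : B z (x - y) = B z x - B z y.
Proof. by rewrite bformDr bformNr. Qed.

Lemma bform0l x : B 0 x = 0.
Proof. by rewrite -(scale0r 0) bformZl mul0r. Qed.

Lemma bform0r x : B x 0 = 0.
Proof. by rewrite bformC bform0l. Qed.

End Bil.
Arguments bformC {R d} x y.
From mathcomp Require Import zify.

Section Coord.
Variables (R : realType) (d : nat).
Hypothesis hd : (1 <= d)%N.
Implicit Types (x y z : 'cV[R]_(d.+1)) (k : R).
Local Notation B := (@bform R d).

Definition sgn (j : 'I_(d.+1)) : R := if ((0 < j) && (j < d))%N then -1 else 1.

Lemma bform_sum x y : B x y = \sum_j sgn j * (x j 0 * y j 0).
Proof.
have h0m : (ord0 : 'I_(d.+1)) != ord_max by apply/eqP => /(congr1 val) /= h; lia.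
rewrite (bigD1 ord0) //= (bigD1 ord_max) 1?eq_sym //=.
rewrite /sgn /= ltnn andbF !mul1r addrA; congr (_ + _).
rewrite -sumrN; apply: eq_big => j.
  by rewrite -!(inj_eq val_inj) /=; have := ltn_ord j; case: (nat_of_ord j) => [|[|n]] /=; lia.
by move=> /andP [h1 h2]; rewrite h1 h2 mulN1r.
Qed.

Lemma inord_eqE (j k : nat) : (j <= d)%N -> (k <= d)%N ->
  (inord j == inord k :> 'I_(d.+1)) = (j == k).
Proof.
move=> hj hk; apply/eqP/eqP => [h|->//].
by have := congr1 (@nat_of_ord _) h; rewrite !inordK.
Qed.

Lemma evecE (j k : nat) : (j <= d)%N -> (k <= d)%N ->
  (@evec R d k) (inord j) 0 = (j == k)%:R.
Proof. by move=> hj hk; rewrite /evec mxE inord_eqE //= andbT. Qed.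

Lemma bform_evec x (k : nat) : (k <= d)%N ->
  B x (evec R d k) = sgn (inord k) * x (inord k) 0.
Proof.
move=> hk; rewrite bform_sum (bigD1 (inord k)) //= big1 ?addr0.
  by rewrite /evec mxE eqxx /= mulr1.
by move=> j hj; rewrite /evec mxE (negbTE hj) /= mulr0 mulr0.
Qed.

Lemma ord0E : (ord0 : 'I_(d.+1)) = inord 0.
Proof. by apply/val_inj; rewrite /= inordK. Qed.
Lemma ordmaxE : (ord_max : 'I_(d.+1)) = inord d.
Proof. by apply/val_inj; rewrite /= inordK. Qed.

Lemma sgn0 : sgn (inord 0) = 1.
Proof. by rewrite /sgn inordK. Qed.
Lemma sgnd : sgn (inord d) = 1.
Proof. by rewrite /sgn inordK // ltnn andbF. Qed.
Lemma sgnm j : (0 < j)%N -> (j < d)%N -> sgn (inord j) = -1.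
Proof. by move=> h1 h2; rewrite /sgn inordK ?h1 ?h2 //; lia. Qed.

Lemma null_mid0 x : B x x = 0 -> x (inord 0) 0 = 0 -> x (inord d) 0 = 0 -> x = 0.
Proof.
move=> hxx h0 hd0.
have hs : \sum_(j < d.+1 | ((0 < j) && (j < d))%N) x j 0 * x j 0 = 0.
  move: hxx; rewrite /bform ord0E ordmaxE h0 hd0 !mul0r add0r => /eqP.
  by rewrite subr_eq0 eq_sym => /eqP.
have hm := psumr_eq0P (fun i _ => sqr_ge0 (x i 0)) hs.
apply/matrixP => i j; rewrite (ord1 j) mxE.
have [/andP [h1 h2]|] := boolP ((0 < i) && (i < d))%N.
  by have /eqP := hm i (introT andP (conj h1 h2)); rewrite mulf_eq0 orbb => /eqP.
rewrite negb_and -leqNgt -ltnNge.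
case/orP => hi.
  by have -> : i = inord 0 by apply/val_inj; rewrite /= inordK //; lia.
by have -> : i = inord d by apply/val_inj; rewrite /= inordK //; have := ltn_ord i; lia.
Qed.

End Coord.
Arguments sgn {R d}.
Arguments bform_sum {R d} hd x y.
Arguments bform_evec {R d} hd x k.
Arguments sgnm {R d} hd {j}.
Section Parts13.
Variables (R : realType) (d : nat).
Hypothesis hd : (1 <= d)%N.
Implicit Types (x y z : 'cV[R]_(d.+1)) (k : R).
Local Notation B := (@bform R d).

Lemma null_pos0 x : B x x = 0 -> (forall i : 'I_(d.+1), (0 < i < d)%N -> x i 0 = 0) -> x = 0.
Proof.
move=> hxx hm.
have hs : \sum_(j < d.+1 | ((0 < j) && (j < d))%N) x j 0 * x j 0 = 0.
  by rewrite big1 // => i /hm ->; rewrite mulr0.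
move: hxx; rewrite /bform hs subr0 => /eqP; rewrite paddr_eq0 ?sqr_ge0 //.
rewrite !mulf_eq0 !orbb => /andP [/eqP h0 /eqP h1].
apply/matrixP => i j; rewrite (ord1 j) mxE.
have [/andP [i1 i2]|] := boolP ((0 < i) && (i < d))%N; first by apply: hm; rewrite i1 i2.
rewrite negb_and -leqNgt -ltnNge.
case/orP => hi.
  by have -> : i = ord0 by apply/val_inj; rewrite /=; lia.
by have -> : i = ord_max by apply/val_inj; rewrite /=; have := ltn_ord i; lia.
Qed.

Lemma null_comb2 a b (al be : R) : B a a = 0 -> B b b = 0 -> B a b = 0 ->
  B (al *: a + be *: b) (al *: a + be *: b) = 0.
Proof.
move=> haa hbb hab.
rewrite !bformDl !bformDr !bformZl !bformZr haa hbb hab (bformC b a) hab; ring.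
Qed.

Lemma part1 a b :
  (forall alpha beta : R, alpha *: a + beta *: b = 0 -> alpha = 0 /\ beta = 0) ->
  B a a = 0 -> B b b = 0 -> B a b = 0 -> (3 <= d)%N.
Proof.
move=> hind haa hbb hab; rewrite leqNgt; apply/negP => hd2.
have mid : forall i : 'I_(d.+1), (0 < i < d)%N -> i = inord 1.
  by move=> i /andP [h1 h2]; apply/val_inj; rewrite /= inordK; lia.
pose c := b (inord 1) 0 *: a + (- a (inord 1) 0) *: b.
have c0 : c = 0.
  apply: null_pos0; first by apply: null_comb2.
  by move=> i /mid ->; rewrite /c !mxE; ring.
have [hb1 ha1] := hind _ _ c0.
have a0 : a = 0.
  apply: null_pos0 => // i /mid ->; by rewrite -[a _ _]opprK ha1 oppr0.
by have [] := hind 1 0; [rewrite a0 scaler0 scale0r addr0 | move=> /eqP; rewrite oner_eq0].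
Qed.

Lemma part3 a b :
  (forall alpha beta : R, alpha *: a + beta *: b = 0 -> alpha = 0 /\ beta = 0) ->
  B a a = 0 -> B b b = 0 -> B a b = 0 ->
  forall x, B x a = 0 -> B x b = 0 -> B x x = 0 ->
      exists alpha beta : R, x = alpha *: a + beta *: b.
Proof.
move=> hind haa hbb hab x hxa hxb hxx.
pose D := a (inord 0) 0 * b (inord d) 0 - a (inord d) 0 * b (inord 0) 0.
have hD : D != 0.
  apply/negP => /eqP hD.
  have c1 : b (inord d) 0 *: a + (- a (inord d) 0) *: b = 0.
    apply: null_mid0 => //; first exact: null_comb2.
      by rewrite !mxE -hD /D; ring.
    by rewrite !mxE; ring.
  have c2 : b (inord 0) 0 *: a + (- a (inord 0) 0) *: b = 0.
    apply: null_mid0 => //; first exact: null_comb2.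
      by rewrite !mxE; ring.
    by rewrite !mxE; apply/eqP; rewrite -oppr_eq0 -hD /D; apply/eqP; ring.
  have [_ /eqP] := hind _ _ c1; rewrite oppr_eq0 => /eqP had.
  have [_ /eqP] := hind _ _ c2; rewrite oppr_eq0 => /eqP ha0.
  have a0 : a = 0 by apply: null_mid0.
  by have [] := hind 1 0; [rewrite a0 scaler0 scale0r addr0 | move=> /eqP; rewrite oner_eq0].
pose al := (x (inord 0) 0 * b (inord d) 0 - x (inord d) 0 * b (inord 0) 0) / D.
pose be := (a (inord 0) 0 * x (inord d) 0 - a (inord d) 0 * x (inord 0) 0) / D.
exists al, be.
have z0 : x + (- al) *: a + (- be) *: b = 0.
  apply: null_mid0 => //.
  - rewrite !bformDl !bformDr !bformZl !bformZr haa hbb hab hxa hxb hxx.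
    rewrite (bformC b a) hab (bformC a x) hxa (bformC b x) hxb; ring.
  - rewrite !mxE /al /be /D; field; exact: hD.
  - rewrite !mxE /al /be /D; field; exact: hD.
by apply/eqP; rewrite -subr_eq0; move/eqP: z0; rewrite -addrA !scaleNr -opprD.
Qed.

End Parts13.
Section Refl.
Variables (R : realType) (d : nat).
Hypothesis hd : (1 <= d)%N.
Implicit Types (x y z w u v : 'cV[R]_(d.+1)) (k : R).
Local Notation B := (@bform R d).

Definition rowJ w : 'rV[R]_(d.+1) := \row_j (sgn j * w j 0).
Definition refl w : 'M[R]_(d.+1) := 1%:M - (2 / B w w) *: (w *m rowJ w).

Lemma rowJ_mul w x : rowJ w *m x = (B w x)%:M.
Proof.
apply/matrixP => i j; rewrite (ord1 i) (ord1 j) !mxE (bform_sum hd) eqxx ?mulr1 /=.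
by apply: eq_bigr => k _; rewrite mxE mulrA.
Qed.

Lemma reflE w x : refl w *m x = x - (2 * B w x / B w w) *: w.
Proof.
rewrite /refl mulmxBl mul1mx -scalemxAl -mulmxA rowJ_mul mul_mx_scalar scalerA.
by rewrite mulrAC.
Qed.

Lemma mx_ext (A C : 'M[R]_(d.+1)) : (forall x, A *m x = C *m x) -> A = C.
Proof.
move=> h; apply/matrixP => i j.
have := congr1 (fun M : 'cV[R]_(d.+1) => M i 0) (h (delta_mx j 0)).
by rewrite -!colE !mxE.
Qed.

Lemma Ogroup1 : Ogroup (1%:M : 'M[R]_(d.+1)).
Proof. by move=> x y; rewrite !mul1mx. Qed.

Lemma OgroupM (L M : 'M[R]_(d.+1)) : Ogroup L -> Ogroup M -> Ogroup (L *m M).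
Proof. by move=> hL hM x y; rewrite -!mulmxA hL hM. Qed.

Lemma refl_O w : B w w != 0 -> Ogroup (refl w).
Proof.
move=> hw x y; rewrite !reflE !bformBl !bformBr !bformZl !bformZr ?(bformC x w) ?(bformC y w).
by field.
Qed.

Lemma refl_fix w z : B w z = 0 -> refl w *m z = z.
Proof. by move=> h; rewrite reflE h mulr0 mul0r scale0r subr0. Qed.

Lemma refl_move x y : B x x = 0 -> B y y = 0 -> B x y != 0 ->
  B (x - y) (x - y) != 0 /\ refl (x - y) *m x = y.
Proof.
move=> hx hy hxy.
have hw : B (x - y) (x - y) = - 2 * B x y.
  by rewrite !bformBl !bformBr hx hy (bformC y x); ring.
split; first by rewrite hw mulf_neq0 // oppr_eq0 pnatr_eq0.
rewrite reflE hw !bformBl hx (bformC y x).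
have -> : 2 * (0 - B x y) / (-2 * B x y) = 1.
  by field.
by rewrite scale1r opprB addrC subrK.
Qed.

Lemma refl_invol w : B w w != 0 -> refl w *m refl w = 1%:M.
Proof.
move=> hw; apply: mx_ext => x; rewrite -mulmxA !reflE mul1mx bformBr bformZr.
have -> : 2 * (B w x - 2 * B w x / B w w * B w w) / B w w = - (2 * B w x / B w w).
  by field.
by rewrite scaleNr opprK subrK.
Qed.

Lemma reflN w : refl (- w) = refl w.
Proof.
rewrite /refl bformNl bformNr opprK; congr (_ - _ *: _).
have -> : rowJ (- w) = - rowJ w by apply/matrixP => i j; rewrite !mxE mulrN.
by rewrite mulNmx mulmxN opprK.
Qed.

Lemma refl_comm u v : B u v = 0 -> refl u *m refl v = refl v *m refl u.
Proof.
move=> huv; apply: mx_ext => x; rewrite -!mulmxA !reflE.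
rewrite !bformBr !bformZr huv (bformC v u) huv !mulr0 !subr0.
by rewrite addrAC.
Qed.

Lemma Ogroup_inj (L : 'M[R]_(d.+1)) z : Ogroup L -> L *m z = 0 -> z = 0.
Proof.
move=> hL hz; apply/matrixP => i j; rewrite (ord1 j) mxE.
have hi : (i <= d)%N by rewrite -ltnS.
have := hL z (evec R d i); rewrite hz bform0l (bform_evec hd _ _ hi) inord_val.
move=> /esym /eqP; rewrite mulf_eq0 => /orP [|/eqP //].
by rewrite /sgn; case: ifP => _; rewrite ?oppr_eq0 oner_eq0.
Qed.

End Refl.
Arguments rowJ {R d}. Arguments refl {R d}. Arguments reflE {R d}. Arguments refl_O {R d}.
Arguments refl_fix {R d}. Arguments refl_move {R d}. Arguments refl_invol {R d}.
Arguments reflN {R d}. Arguments refl_comm {R d}. Arguments Ogroup_inj {R d}.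
Arguments Ogroup1 {R d}. Arguments OgroupM {R d}. Arguments mx_ext {R d}. Arguments rowJ_mul {R d}.
Section Topo.
Variables (R : realType).

Lemma mx_cont_entry (T : topologicalType) m n (F : T -> 'M[R]_(m, n)) x :
  (forall i j, {for x, continuous (fun t => F t i j)}) -> {for x, continuous F}.
Proof.
move=> h A /nbhs_ballP [e e0 eA].
apply: (@filterS _ _ _ (fun t => forall i j, ball (F x i j) e (F t i j))).
  by move=> t ht; apply: eA; split => //.
apply: filter_forall => i; apply: filter_forall => j.
exact: (h i j) _ (nbhsx_ballx _ _ e0).
Qed.

Lemma cont_sum (T : topologicalType) (I : Type) (r : seq I) (P : pred I)
  (F : I -> T -> R) x :
  (forall i, {for x, continuous (F i)}) ->
  {for x, continuous (fun t => \sum_(i <- r | P i) F i t)}.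
Proof.
move=> h; elim: r => [|i r IH].
  have -> : (fun t => \sum_(i <- [::] | P i) F i t) = fun=> 0.
    by apply: funext => t; rewrite big_nil.
  exact: cst_continuous.
have -> : (fun t => \sum_(j <- i :: r | P j) F j t) =
   fun t => if P i then F i t + \sum_(j <- r | P j) F j t else \sum_(j <- r | P j) F j t.
  by apply: funext => t; rewrite big_cons.
case: (P i) => //.
exact: (@continuousD _ _ _ (F i) (fun t => \sum_(j <- r | P j) F j t)).
Qed.

Lemma mulmx_cont n (Q P : 'M[R]_n) : continuous (fun X : 'M[R]_n => Q *m X *m P).
Proof.
move=> X; apply: mx_cont_entry => i j.
have -> : (fun Y : 'M[R]_n => (Q *m Y *m P) i j) =
   (fun Y => \sum_l (\sum_k Q i k * Y k l) * P l j).
  by apply: funext => Y; rewrite !mxE; apply: eq_bigr => l _; rewrite !mxE.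
apply: cont_sum => l.
apply: (@continuousM _ _ (fun Y : 'M[R]_n => \sum_k Q i k * Y k l) (fun _ => P l j)); last exact: cst_continuous.
apply: cont_sum => k.
apply: (@continuousM _ _ (fun _ => Q i k) (fun Y : 'M[R]_n => Y k l)); first exact: cst_continuous.
exact: coord_continuous.
Qed.

End Topo.
Lemma contD (T : topologicalType) (K : numFieldType) (V : normedModType K) (f g : T -> V) x :
  {for x, continuous f} -> {for x, continuous g} -> {for x, continuous (fun t => f t + g t)}.
Proof. by move=> hf hg; exact: (continuousD hf hg). Qed.
Section G0facts.
Variables (R : realType) (d : nat).
Hypothesis hd : (1 <= d)%N.
Implicit Types (x y z w u v r s : 'cV[R]_(d.+1)) (k : R).
Local Notation B := (@bform R d).
Local Notation O := (@Ogroup R d).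
Local Notation M := ('M[R]_(d.+1)).

Lemma cc_O (A X : M) : connected_component O A X -> O A.
Proof.
move=> h; apply: contrapT => nA; move: h.
by rewrite connected_component_out.
Qed.

Lemma TL2 (A X Q P : M) : connected_component O A X -> O Q -> O P ->
  connected_component O (Q *m A *m P) (Q *m X *m P).
Proof.
move=> hX hQ hP.
pose phi := fun Y : M => Q *m Y *m P.
have hC : connected (phi @` connected_component O A).
  apply: connected_continuous_connected; first exact: component_connected.
  by apply: continuous_subspaceT; exact: mulmx_cont.
have h1 : (phi @` connected_component O A) (phi A).
  by exists A => //; apply: connected_component_refl; exact: cc_O hX.
have h2 : phi @` connected_component O A `<=` O.
  move=> _ [Y hY <-]; apply: OgroupM => //; apply: OgroupM => //.
  exact: connected_component_sub hY.
apply: (connected_component_max h1 h2 hC).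
by exists X.
Qed.

Lemma G0_O (X : M) : G0 X -> O X.
Proof. exact: connected_component_sub. Qed.

Lemma G0_1 : G0 (1%:M : M).
Proof. exact/connected_component_refl/Ogroup1. Qed.

Lemma G0_mul3 (X Q P : M) : G0 X -> O Q -> O P -> G0 (Q *m P) -> G0 (Q *m X *m P).
Proof.
move=> hX hQ hP hQP.
have := @TL2 1%:M X Q P hX hQ hP; rewrite mulmx1 => h.
exact: connected_component_trans hQP h.
Qed.

Lemma G0_mul (X Y : M) : G0 X -> G0 Y -> G0 (X *m Y).
Proof.
move=> hX hY; have := @G0_mul3 Y X 1%:M hY (@G0_O _ hX) Ogroup1.
by rewrite !mulmx1; apply.
Qed.

Lemma G0_conj (X Q : M) : G0 X -> O Q -> Q *m Q = 1%:M -> G0 (Q *m X *m Q).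
Proof. by move=> hX hQ hQQ; apply: G0_mul3 => //; rewrite hQQ; exact: G0_1. Qed.

End G0facts.
Section Path.
Variables (R : realType) (d : nat).
Hypothesis hd : (1 <= d)%N.
Implicit Types (x y z w u v r s : 'cV[R]_(d.+1)) (k : R).
Local Notation B := (@bform R d).
Local Notation O := (@Ogroup R d).
Local Notation M := ('M[R]_(d.+1)).

Lemma rowJ_lin (a b : R) x y : rowJ (a *: x + b *: y) = a *: rowJ x + b *: rowJ y.
Proof. by apply/matrixP => i j; rewrite !mxE; ring. Qed.

Lemma cont_poly (p : {poly R}) (g : R -> R) t : (forall t, g t = p.[t]) ->
  {for t, continuous g}.
Proof.
move=> h; have -> : g = horner p by apply: funext => x; rewrite h.
exact: continuous_horner.
Qed.

Lemma G0_refl2 r s :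
  ((0 < B r r) && (0 < B s s)) || ((B r r < 0) && (B s s < 0)) ->
  G0 (refl r *m refl s).
Proof.
move=> hsg.
have hprod : 0 < B r r * B s s.
  by case/orP: hsg => /andP [h1 h2]; nra.
pose s' := if 0 <= B r s * B r r then s else - s.
have hs's' : B s' s' = B s s by rewrite /s'; case: ifP => _; rewrite ?bformNl ?bformNr ?opprK.
have hrs' : 0 <= B r s' * B r r.
  rewrite /s'; case: ifP => // /negbT; rewrite -ltNge bformNr => h; nra.
have refls' : refl s' = refl s by rewrite /s'; case: ifP => _ //; rewrite reflN.
pose w t := (1 - t) *: r + t *: s'.
pose q t := (1 - t) ^+ 2 * B r r + 2 * ((1 - t) * t) * B r s' + t ^+ 2 * B s s.
have hq t : B (w t) (w t) = q t.
  rewrite /w /q !bformDl !bformDr !bformZl !bformZr hs's' (bformC s' r); ring.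
have hqpos t : 0 <= t <= 1 -> 0 < B r r * q t.
  move=> /andP [t0 t1].
  have h1 : 0 <= 2 * ((1 - t) * t) * (B r s' * B r r).
    apply: mulr_ge0; last exact: hrs'.
    by apply: mulr_ge0 => //; apply: mulr_ge0; lra.
  have h2 : 0 < (1 - t) ^+ 2 * (B r r * B r r) + t ^+ 2 * (B r r * B s s).
    have hrr : 0 < B r r * B r r.
      by case/orP: hsg => /andP [? ?]; nra.
    rewrite !expr2; have [ht|ht] := leP t (1/2).
      have p1 : 0 < (1 - t) * (1 - t) * (B r r * B r r) by apply: mulr_gt0 => //; nra.
      have p2 : 0 <= t * t * (B r r * B s s) by apply: mulr_ge0; [nra | exact: ltW].
      lra.
    have p1 : 0 <= (1 - t) * (1 - t) * (B r r * B r r) by apply: mulr_ge0; [nra | exact: ltW].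
    have p2 : 0 < t * t * (B r r * B s s) by apply: mulr_gt0 => //; nra.
    lra.
  have -> : B r r * q t = 2 * ((1 - t) * t) * (B r s' * B r r) +
     ((1 - t) ^+ 2 * (B r r * B r r) + t ^+ 2 * (B r r * B s s)) by rewrite /q; ring.
  exact: ltr_wpDl h1 h2.
have hq0 t : 0 <= t <= 1 -> q t != 0.
  by move=> /hqpos; apply: contraPneq => ->; rewrite mulr0 ltxx.
pose f t := refl (w t).
have fE : forall t, f t = 1%:M - (2 * (q t)^-1) *: ((1 - t) ^+ 2 *: (r *m rowJ r)
   + ((1 - t) * t) *: (r *m rowJ s' + s' *m rowJ r) + t ^+ 2 *: (s' *m rowJ s')).
  move=> t; rewrite /f /refl hq; congr (_ - _ *: _).
  rewrite /w rowJ_lin mulmxDl !mulmxDr -!scalemxAl -!scalemxAr !scalerA.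
  rewrite [t * (1 - t)]mulrC -!expr2 !scalerDr !addrA.
  by [].
pose C := f @` `[0, 1].
have hC : connected C.
  apply: connected_continuous_connected; first exact: segment_connected.
  apply: continuous_in_subspaceT => t; rewrite inE /= in_itv /= => ht.
  have -> : f = fun t => 1%:M - (2 * (q t)^-1) *: ((1 - t) ^+ 2 *: (r *m rowJ r)
   + ((1 - t) * t) *: (r *m rowJ s' + s' *m rowJ r) + t ^+ 2 *: (s' *m rowJ s')).
    by apply: funext => u; rewrite fE.
  apply: (@continuousB _ _ _ (fun=> 1%:M) (fun t => (2 * (q t)^-1) *: ((1 - t) ^+ 2 *: (r *m rowJ r)
   + ((1 - t) * t) *: (r *m rowJ s' + s' *m rowJ r) + t ^+ 2 *: (s' *m rowJ s')))).
    exact: cst_continuous.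
  apply: (@continuousZ _ _ _ (fun t => 2 * (q t)^-1) (fun t => ((1 - t) ^+ 2 *: (r *m rowJ r)
   + ((1 - t) * t) *: (r *m rowJ s' + s' *m rowJ r) + t ^+ 2 *: (s' *m rowJ s')))).
    apply: (@continuousM _ _ (fun=> 2) (fun t => (q t)^-1)); first exact: cst_continuous.
    apply: continuousV; first exact: hq0.
    apply: (@cont_poly ((1 - 'X) ^+ 2 * (B r r)%:P + 2%:P * ((1 - 'X) * 'X) * (B r s')%:P + 'X ^+ 2 * (B s s)%:P)).
    by move=> u; rewrite /q !hornerE.
  apply: contD; first apply: contD.
  - apply: continuousZr_tmp; apply: (@cont_poly ((1 - 'X) ^+ 2)) => u; by rewrite !hornerE.
  - apply: continuousZr_tmp; apply: (@cont_poly ((1 - 'X) * 'X)) => u; by rewrite !hornerE.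
  - apply: continuousZr_tmp; apply: (@cont_poly ('X ^+ 2)) => u; by rewrite !hornerE.
have C0 : C (refl r).
  exists 0; first by rewrite /= in_itv /= lexx ler01.
  by rewrite /f /w subr0 scale1r scale0r addr0.
have C1 : C (refl s).
  exists 1; first by rewrite /= in_itv /= lexx ler01.
  by rewrite /f /w subrr scale0r scale1r add0r refls'.
have CO : C `<=` O.
  move=> _ [t ht <-]; apply: (refl_O hd).
  have := hq0 t; rewrite -hq; apply.
  by move: ht; rewrite /= in_itv.
have hcc := connected_component_max C1 CO hC C0.
have hs0 : B s s != 0 by apply/eqP => h; move: hprod; rewrite h mulr0 ltxx.
have := @TL2 R d (refl s) (refl r) 1%:M (refl s) hcc Ogroup1 (refl_O hd _ hs0).
by rewrite !mul1mx refl_invol.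
Qed.

End Path.
Section ClsSec.
Variables (R : realType) (d : nat).
Hypothesis hd2 : (2 <= d)%N.
Implicit Types (x y z w u v r s : 'cV[R]_(d.+1)) (k : R).
Local Notation B := (@bform R d).
Local Notation O := (@Ogroup R d).
Local Notation M := ('M[R]_(d.+1)).
Local Notation E := (@evec R d).

Let hd : (1 <= d)%N. Proof. by apply: leq_trans hd2. Qed.

Lemma ndd1 : (d == d.-1) = false.
Proof. by apply/eqP; lia. Qed.

Lemma BEd x : B x (E d) = x (inord d) 0.
Proof. by rewrite (bform_evec hd) // sgnd mul1r. Qed.
Lemma BE0 x : B x (E 0) = x (inord 0) 0.
Proof. by rewrite (bform_evec hd) // sgn0 mul1r. Qed.
Lemma BEj x j : (0 < j)%N -> (j < d)%N -> B x (E j) = - x (inord j) 0.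
Proof. by move=> h1 h2; rewrite (bform_evec hd) ?(sgnm hd h1 h2) ?mulN1r //; lia. Qed.

Lemma BEdd : B (E d) (E d) = 1.
Proof. by rewrite BEd evecE // eqxx. Qed.
Lemma BEmm : B (E d.-1) (E d.-1) = -1.
Proof. rewrite BEj; first (rewrite evecE; [by rewrite eqxx | lia | lia]). all: lia. Qed.
Lemma BEdm : B (E d) (E d.-1) = 0.
Proof. rewrite BEj; first (rewrite evecE; [by rewrite eq_sym ndd1 oppr0 | lia | lia]). all: lia. Qed.

Definition rP := refl (E d).
Definition rN := refl (E d.-1).

Lemma rP_O : O rP. Proof. by apply: (refl_O hd); rewrite BEdd oner_eq0. Qed.
Lemma rN_O : O rN. Proof. by apply: (refl_O hd); rewrite BEmm oppr_eq0 oner_eq0. Qed.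
Lemma rPP : rP *m rP = 1%:M. Proof. by apply: (refl_invol hd); rewrite BEdd oner_eq0. Qed.
Lemma rNN : rN *m rN = 1%:M. Proof. by apply: (refl_invol hd); rewrite BEmm oppr_eq0 oner_eq0. Qed.
Lemma rPN : rP *m rN = rN *m rP. Proof. exact: (refl_comm hd) BEdm. Qed.

Definition Y (i j : bool) : M := (if i then rP else 1%:M) *m (if j then rN else 1%:M).

Lemma Y_O i j : O (Y i j).
Proof.
by rewrite /Y; apply: OgroupM; [case: i; [exact: rP_O|exact: Ogroup1] | case: j; [exact: rN_O|exact: Ogroup1]].
Qed.

Lemma Y_YP i j : Y i j *m rP = Y (~~ i) j.
Proof.
rewrite /Y; case: i; case: j => /=.
- by rewrite rPN -mulmxA rPP mulmx1 mul1mx.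
- by rewrite mulmx1 rPP mulmx1.
- by rewrite mul1mx rPN.
- by rewrite !mulmx1 mul1mx.
Qed.

Lemma Y_YN i j : Y i j *m rN = Y i (~~ j).
Proof.
rewrite /Y; case: i; case: j => /=.
- by rewrite -mulmxA rNN.
- by rewrite mulmx1.
- by rewrite -mulmxA rNN.
- by rewrite mulmx1.
Qed.

Lemma Y_PY i j : rP *m Y i j = Y i j *m rP.
Proof.
rewrite /Y; case: i; case: j => /=.
- by rewrite mulmxA rPP mul1mx rPN -mulmxA rPP mulmx1.
- by rewrite !mulmx1.
- by rewrite !mul1mx rPN.
- by rewrite !mulmx1 mul1mx.
Qed.

Lemma Y_NY i j : rN *m Y i j = Y i j *m rN.
Proof.
rewrite /Y; case: i; case: j => /=.
- by rewrite mulmxA -rPN.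
- by rewrite !mulmx1 rPN.
- by rewrite !mul1mx.
- by rewrite !mulmx1 mul1mx.
Qed.

Lemma YY i j : Y i j *m Y i j = 1%:M.
Proof.
rewrite /Y; case: i; case: j => /=.
- by rewrite {1}rPN -mulmxA (mulmxA rP) rPP mul1mx rNN.
- by rewrite !mulmx1 rPP.
- by rewrite !mul1mx rNN.
- by rewrite !mulmx1.
Qed.

Definition Cls (P : M) := exists i j X, G0 X /\ P = Y i j *m X.

Lemma Cls1 : Cls 1%:M.
Proof. by exists false, false, 1%:M; split; [exact: G0_1 | rewrite /Y !mulmx1]. Qed.

Lemma Cls_O P : Cls P -> O P.
Proof. by move=> [i [j [X [hX ->]]]]; apply: OgroupM; [exact: Y_O | exact: G0_O]. Qed.

Lemma Cls_step P r : B r r != 0 -> Cls P -> Cls (refl r *m P).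
Proof.
move=> hr [i [j [X [hX ->]]]].
have hrO := refl_O hd _ hr.
have hYO := Y_O i j.
move: (YY i j) (Y_PY i j) (Y_YP i j) (Y_NY i j) (Y_YN i j) hYO.
set y := Y i j => hyy hyP hYP hyN hYN hyO; clearbody y.
have [hpos|hneg] := ltrP 0 (B r r).
  exists (~~ i), j, ((y *m (rP *m refl r) *m y) *m X); split.
    apply: G0_mul => //; apply: G0_conj => //.
    by apply: G0_refl2 => //; rewrite BEdd ltr01 hpos.
  rewrite -hYP !mulmxA -(mulmxA y rP y) hyP mulmxA hyy mul1mx rPP mul1mx.
  by [].
have hneg' : B r r < 0 by rewrite lt_neqAle hr hneg.
exists i, (~~ j), ((y *m (rN *m refl r) *m y) *m X); split.
  apply: G0_mul => //; apply: G0_conj => //.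
  by apply: G0_refl2 => //; rewrite BEmm hneg' ltrN10 orbT.
rewrite -hYN !mulmxA -(mulmxA y rN y) hyN mulmxA hyy mul1mx rNN mul1mx.
by [].
Qed.

End ClsSec.
Arguments BEd {R d}. Arguments BE0 {R d}. Arguments BEj {R d}. Arguments BEdd {R d}.
Arguments BEmm {R d}. Arguments BEdm {R d}. Arguments rP {R d}. Arguments rN {R d}.
Arguments Y {R d}. Arguments Cls {R d}. Arguments Cls1 {R d}. Arguments Cls_O {R d}.
Arguments Cls_step {R d}. Arguments Y_O {R d}. Arguments YY {R d}. Arguments ndd1 {d}.
Arguments rP_O {R d}. Arguments rN_O {R d}.
Ltac nsimp := repeat match goal with |- context [(?x == ?y :> nat)] =>
  first [ rewrite (_ : (x == y) = false); last (by apply/eqP; lia)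
        | rewrite (_ : (x == y) = true); last (by apply/eqP; lia) ] end.
Ltac bsimp := rewrite ?bformDl ?bformDr ?bformBl ?bformBr ?bformZl ?bformZr ?bformNl ?bformNr.

Section Alg.
Variables (R : realType) (d : nat).
Hypothesis hd3 : (3 <= d)%N.
Variables (a b : 'cV[R]_(d.+1)).
Hypothesis hind : forall alpha beta : R, alpha *: a + beta *: b = 0 -> alpha = 0 /\ beta = 0.
Hypotheses (haa : bform a a = 0) (hbb : bform b b = 0) (hab : bform a b = 0).
Implicit Types (x y z w u v r s : 'cV[R]_(d.+1)) (k : R).
Local Notation B := (@bform R d).
Local Notation O := (@Ogroup R d).
Local Notation M := ('M[R]_(d.+1)).
Local Notation E := (@evec R d).

Let hd : (1 <= d)%N. Proof. by apply: leq_trans hd3. Qed.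
Let hd2 : (2 <= d)%N. Proof. by apply: leq_trans hd3. Qed.

Lemma BE1 x : B x (E 1) = - x (inord 1) 0.
Proof. by rewrite (BEj hd2) //; lia. Qed.
Lemma BEm x : B x (E d.-1) = - x (inord d.-1) 0.
Proof. by rewrite (BEj hd2) //; lia. Qed.

Ltac bev := bsimp; rewrite ?(BE0 hd2) ?(BEd hd2) ?BE1 ?BEm; repeat (rewrite evecE; [|lia|lia]); nsimp.

Definition f := E 0 + E 1.
Definition g (e : R) := e *: E d.-1 + E d.

Definition Reach u v := exists P, Cls P /\ P *m a = u /\ P *m b = v.

Lemma Reach0 : Reach a b.
Proof. by exists 1%:M; rewrite !mul1mx; split => //; exact: Cls1. Qed.

Lemma Reach_facts {u v} : Reach u v ->
  [/\ B u u = 0, B v v = 0, B u v = 0 & forall l, v <> l *: u].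
Proof.
move=> [P [hP [<- <-]]]; have hO : O P by apply: (Cls_O hd2).
split; rewrite ?hO //.
move=> l hl.
have : P *m (b - l *: a) = 0 by rewrite mulmxBr -scalemxAr hl subrr.
move=> /(Ogroup_inj hd _ _ hO) h.
have := hind (- l) 1; rewrite scale1r scaleNr addrC h => /(_ erefl) [_ /eqP].
by rewrite oner_eq0.
Qed.

Lemma Reach_refl {u v w} : Reach u v -> B w w != 0 -> Reach (refl w *m u) (refl w *m v).
Proof.
move=> [P [hP [hu hv]]] hw; exists (refl w *m P); split.
  exact: (Cls_step hd2).
by rewrite -!mulmxA hu hv.
Qed.

Lemma move1 {u v y} : Reach u v -> B y y = 0 -> B u y != 0 -> exists v', Reach y v'.
Proof.
move=> hR hy huy; have [hu _ _ _] := Reach_facts hR.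
have [hw hm] := refl_move hd _ _ hu hy huy.
by have := Reach_refl hR hw; rewrite hm => h; exists (refl (u - y) *m v).
Qed.

Lemma move2 {u v y} : Reach u v -> B y y = 0 -> B v y != 0 -> B (v - y) u = 0 -> Reach u y.
Proof.
move=> hR hy hvy hvu; have [_ hv _ _] := Reach_facts hR.
have [hw hm] := refl_move hd _ _ hv hy hvy.
have := Reach_refl hR hw; rewrite hm (refl_fix hd) //.
Qed.

Lemma Bxf x : B x f = x (inord 0) 0 - x (inord 1) 0.
Proof. by rewrite /f bformDr (BE0 hd2) BE1. Qed.

Lemma step1 : exists v, Reach f v.
Proof.
have hff : B f f = 0 by rewrite /f; bev; rewrite /=; ring.
have [h1|h1] := eqVneq (B a f) 0; last exact: move1 Reach0 hff h1.
pose F1 := E 0 - E 1.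
have hF1 : B F1 F1 = 0 by rewrite /F1; bev; rewrite /=; ring.
have hF1f : B F1 f != 0.
  by rewrite /F1 /f; bev; rewrite /=; apply/eqP; lra.
have [h2|h2] := eqVneq (B a F1) 0; last first.
  have [v hv] := move1 Reach0 hF1 h2.
  exact: move1 hv hff hF1f.
pose F2 := E d + E 1.
have hF2 : B F2 F2 = 0 by rewrite /F2; bev; rewrite /=; ring.
have hF2f : B F2 f != 0.
  by rewrite /F2 /f; bev; rewrite /=; apply/eqP; lra.
have [h3|h3] := eqVneq (B a F2) 0; last first.
  have [v hv] := move1 Reach0 hF2 h3.
  exact: move1 hv hff hF2f.
exfalso.
move: h1 h2 h3; rewrite /F1 /F2 Bxf; bsimp; rewrite (BE0 hd2) (BEd hd2) BE1.
move=> h1 h2 h3.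
have a0 : a = 0.
  apply: null_mid0 => //; lra.
have [] := hind 1 0; first by rewrite a0 scaler0 scale0r addr0.
by move=> /eqP; rewrite oner_eq0.
Qed.

Lemma step2 v : Reach f v -> exists e : R, (e = 1 \/ e = -1) /\ Reach f (g e).
Proof.
move=> hR; have [hff hvv hfv hnot] := Reach_facts hR.
have hBvf : B v f = 0 by rewrite bformC.
have hgf e : B (g e) f = 0.
  by rewrite /g /f; bev; rewrite /=; ring.
have hgg e : e = 1 \/ e = -1 -> B (g e) (g e) = 0.
  by move=> he; rewrite /g; bev; rewrite /=; case: he => ->; ring.
have [[j [/andP [hj1 hj2] hvj]]|hnone] :=
   pselect (exists j, (2 <= j <= d.-1)%N /\ v (inord j) 0 != v (inord d) 0).
  have hj0 : (0 < j)%N by lia.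
  have hjd : (j < d)%N by lia.
  pose t := E j + E d.
  have htt : B t t = 0.
    by rewrite /t; bsimp; rewrite ?(BEj hd2 _ j hj0 hjd) ?(BEd hd2); repeat (rewrite evecE; [|lia|lia]); nsimp; rewrite /=; ring.
  have htf : B t f = 0.
    by rewrite /t /f; bev; rewrite /=; ring.
  have hvt : B v t != 0.
    rewrite /t bformDr (BEj hd2 _ j hj0 hjd) (BEd hd2).
    by apply: contra hvj => /eqP h; apply/eqP; lra.
  have hR1 : Reach f t.
    by apply: (move2 hR htt hvt); rewrite bformBl hBvf htf subrr.
  exists 1; split; first by left.
  have [hjm|hjm] := eqVneq j d.-1.
    by move: hR1; rewrite /t /g scale1r hjm.
  apply: (move2 hR1 (hgg 1 (or_introl erefl))).
    rewrite /t /g; bsimp; rewrite ?(BEj hd2 _ j hj0 hjd) ?(BEd hd2) ?BEm.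
    repeat (rewrite evecE; [|lia|lia]); nsimp; rewrite /=; apply/eqP; lra.
  by rewrite bformBl htf hgf subrr.
have hall : forall j, (2 <= j <= d.-1)%N -> v (inord j) 0 = v (inord d) 0.
  move=> j hj; apply/eqP; apply: contrapT => hne; apply: hnone; exists j; split => //.
  exact/negP.
have hvd : v (inord d) 0 != 0.
  apply/negP => /eqP hvd; apply: (hnot (v (inord 0) 0)).
  have h01 : v (inord 0) 0 = v (inord 1) 0 by move: hBvf; rewrite Bxf => /eqP; rewrite subr_eq0 => /eqP.
  apply/matrixP => i k; rewrite (ord1 k) -(inord_val i).
  have hi : (i <= d)%N by rewrite -ltnS.
  rewrite [RHS]mxE /f [(E 0 + E 1) _ _]mxE !evecE; try (by lia).
  move: hi; case: (nat_of_ord i) => [|[|n]] hn /=.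
  - by rewrite addr0 mulr1.
  - by rewrite add0r mulr1.
  - rewrite addr0 mulr0.
    have [hnd|hnd] := eqVneq n.+2 d; first by rewrite hnd.
    by rewrite hall ?hvd //; lia.
exists (-1); split; first by right.
apply: (move2 hR (hgg (-1) (or_intror erefl))).
  rewrite /g; bsimp; rewrite ?(BEd hd2) ?BEm hall; last by lia.
  by apply: contra hvd => /eqP h; apply/eqP; lra.
by rewrite bformBl hBvf hgf subrr.
Qed.

End Alg.
Arguments f {R d}. Arguments g {R d}. Arguments BE1 {R d}. Arguments BEm {R d}.
Arguments Bxf {R d}.
Section Final.
Variables (R : realType) (d : nat).
Hypothesis hd3 : (3 <= d)%N.
Implicit Types (x y z w u v r s : 'cV[R]_(d.+1)) (k : R).
Local Notation B := (@bform R d).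
Local Notation E := (@evec R d).
Local Notation rP := (@rP R d).
Local Notation rN := (@rN R d).
Local Notation f := (@f R d).
Local Notation g := (@g R d).
Local Notation Y := (@Y R d).
Let hd : (1 <= d)%N. Proof. by apply: leq_trans hd3. Qed.
Let hd2 : (2 <= d)%N. Proof. by apply: leq_trans hd3. Qed.

Ltac bev := bsimp; rewrite ?(BE0 hd2) ?(BEd hd2) ?(BE1 hd3) ?(BEm hd3); repeat (rewrite evecE; [|lia|lia]); nsimp.

Lemma rPf : rP *m f = f.
Proof. by apply: (refl_fix hd); rewrite bformC /f; bev; rewrite /= addr0. Qed.
Lemma rNf : rN *m f = f.
Proof. by apply: (refl_fix hd); rewrite bformC /f; bev; rewrite /=; lra. Qed.

Lemma rPg e : rP *m g e = (-1) *: g (- e).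
Proof.
rewrite /rP (reflE hd) (BEdd hd2) bformC /g; bev; rewrite /=.
by apply/matrixP => i k; rewrite !mxE; field.
Qed.

Lemma rNg e : e * e = 1 -> rN *m g e = g (- e).
Proof.
move=> he; rewrite /rN (reflE hd) (BEmm hd2) bformC /g; bev; rewrite /=.
by apply/matrixP => i k; rewrite !mxE; field.
Qed.

Lemma pm1 (e : R) : e = 1 \/ e = -1 -> e * e = 1.
Proof. by case=> ->; ring. Qed.
Lemma pm1N (e : R) : e = 1 \/ e = -1 -> - e = 1 \/ - e = -1.
Proof. by case=> ->; [right|left; rewrite opprK]. Qed.

Lemma Yg (i j : bool) (e : R) : e = 1 \/ e = -1 -> exists (sg e' : R), (sg = 1 \/ sg = -1) /\ (e' = 1 \/ e' = -1) /\
   Y i j *m g e = sg *: g e'.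
Proof.
move=> he; rewrite /Y; case: i; case: j; rewrite ?mul1mx ?mulmx1 -?mulmxA.
- exists (-1), e; split; [by right|split => //].
  by rewrite (rNg _ (pm1 _ he)) rPg opprK.
- by exists (-1), (- e); split; [right|split; [exact: pm1N|exact: rPg]].
- exists 1, (- e); split; [by left|split; [exact: pm1N|]].
  by rewrite scale1r; exact: rNg (pm1 _ he).
- by exists 1, e; rewrite scale1r; split; [left|].
Qed.

Lemma Yf (i j : bool) : Y i j *m f = f.
Proof.
rewrite /Y; case: i; case: j; rewrite ?mul1mx ?mulmx1 -?mulmxA ?rNf ?rPf //.
Qed.

End Final.

Theorem lemma2 (R : realType) (d : nat) (hd : (1 <= d)%N)
  (a b : 'cV[R]_(d.+1))
  (hind : forall alpha beta : R, alpha *: a + beta *: b = 0 ->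
            alpha = 0 /\ beta = 0)
  (haa : bform a a = 0) (hbb : bform b b = 0) (hab : bform a b = 0) :
  (4 <= d.+1)%N /\
  (exists (L : 'M[R]_(d.+1)) (s eps : R),
      G0 L /\ (s = 1 \/ s = -1) /\ (eps = 1 \/ eps = -1) /\
      L *m a = @evec R d 0 + @evec R d 1 /\
      L *m b = s *: (eps *: @evec R d d.-1 + @evec R d d)) /\
  (forall x : 'cV[R]_(d.+1),
      bform x a = 0 -> bform x b = 0 -> bform x x = 0 ->
      exists alpha beta : R, x = alpha *: a + beta *: b).
Proof.
have hd3 : (3 <= d)%N := @part1 R d hd a b hind haa hbb hab.
have hd2 : (2 <= d)%N by apply: leq_trans hd3.
split; first by lia.
split; last exact: (@part3 R d hd a b hind haa hbb hab).
have [v hv] := @step1 R d hd3 a b hind haa hbb hab.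
have [e [he hR]] := @step2 R d hd3 a b hind haa hbb hab v hv.
move: hR => [P [[i [j [X [hX hPX]]]] [hPa hPb]]].
have hXe : X = Y i j *m P.
  rewrite hPX; move: (@YY R d hd2 i j); set y := Y i j => hyy; clearbody y.
  by rewrite mulmxA hyy mul1mx.
have [sg [e' [hsg [he' hYg]]]] := @Yg R d hd3 i j e he.
exists X, sg, e'; split => //; split => //; split => //; split.
  by rewrite hXe -mulmxA hPa (@Yf R d hd3).
by rewrite hXe -mulmxA hPb hYg.
Qed.
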